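(* Let $p,\mu>1$, $\varepsilon>0$, and let $\rho:[0,\infty)\to[2-\mu,p]$ be continuous and decreasing with $\rho(0)=p$ and $\lim_{r\to\infty}\rho(r)=2-\mu$. Define $$G(\xi):=\int_0^{|\xi|}\int_0^s(\varepsilon+r)^{\rho(r)-2}\,\mathrm{d}r\,\mathrm{d}s,\quad\xi\in\mathbb{R}^2.$$ Then there are constants $c_5,c_6>0$ with $$c_5(1+|\xi|)^{-\mu}|\eta|^2\le D^2G(\xi)(\eta,\eta)\le c_6(1+|\xi|)^{p-2}|\eta|^2\quad\text{for all }\xi,\eta\in\mathbb{R}^2,$$ and there is a constant $c_{49}$ with $|D^2G(\xi)|\,|\xi|^2\le c_{49}(G(\xi)+1)$ for all $\xi\in\mathbb{R}^2$. *)

(* Defs.v *)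
From Stdlib Require Import Reals.
From Coquelicot Require Import Coquelicot.
Open Scope R_scope.

Definition Gfun (eps : R) (rho : R -> R) (x y : R) : R :=
  RInt (fun s => RInt (fun r => Rpower (eps + r) (rho r - 2)) 0 s) 0 (sqrt (x ^ 2 + y ^ 2)).

Definition d1 (f : R -> R -> R) (x y : R) : R := Derive (fun t => f t y) x.
Definition d2 (f : R -> R -> R) (x y : R) : R := Derive (fun t => f x t) y.

Definition H11 f := d1 (d1 f).
Definition H12 f := d2 (d1 f).
Definition H21 f := d1 (d2 f).
Definition H22 f := d2 (d2 f).

Definition D2form (f : R -> R -> R) (x y a b : R) : R :=
  H11 f x y * a * a + H12 f x y * a * b + H21 f x y * b * a + H22 f x y * b * b.

(* |D^2 f (x,y)| : Frobenius (Hilbert-Schmidt) norm of the Hessian *)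
Definition D2norm (f : R -> R -> R) (x y : R) : R :=
  sqrt (H11 f x y ^ 2 + H12 f x y ^ 2 + H21 f x y ^ 2 + H22 f x y ^ 2).

Definition norm2 (x y : R) : R := sqrt (x ^ 2 + y ^ 2).

(* Main.v *)
Require Import Defs.
From Stdlib Require Import Reals Lra.
From Coquelicot Require Import Coquelicot.
Open Scope R_scope.
Import Defs.

Definition fr (eps : R) (rho : R -> R) (r : R) := Rpower (eps + r) (rho r - 2).
Definition fe eps rho r := fr eps rho (Rabs r).
Definition Fe eps rho s := RInt (fe eps rho) 0 s.
Definition ge eps rho t := RInt (Fe eps rho) 0 t.

Lemma fr_pos eps rho r : 0 < fr eps rho r.
Proof. unfold fr, Rpower. apply exp_pos. Qed.

Lemma cont_rho_abs (rho : R -> R)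
  (hcont : forall r, 0 <= r ->
     filterlim rho (within (fun t => 0 <= t) (locally r)) (locally (rho r))) z :
  continuous (fun t => rho (Rabs t)) z.
Proof.
  unfold continuous.
  eapply filterlim_comp with (G := within (fun t => 0<=t) (locally (Rabs z))).
  - intros P HP. unfold within in HP.
    generalize (continuous_Rabs z _ HP). unfold filtermap. apply filter_imp.
    intros t Ht. apply Ht. apply Rabs_pos.
  - apply hcont, Rabs_pos.
Qed.

Lemma fe_cont eps (rho : R -> R) (heps : 0 < eps)
  (hcont : forall r, 0 <= r ->
     filterlim rho (within (fun t => 0 <= t) (locally r)) (locally (rho r))) z :
  continuous (fe eps rho) z.
Proof.
  unfold fe, fr, Rpower.
  apply continuous_exp_comp.
  apply (continuous_mult (fun t => rho (Rabs t) - 2) (fun t => ln (eps + Rabs t))).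
  - apply (continuous_plus (fun t => rho (Rabs t)) (fun _ => -2)).
    apply cont_rho_abs; auto. apply continuous_const.
  - apply continuous_comp with (g := ln).
    apply (continuous_plus (fun _ => eps) Rabs). apply continuous_const. apply continuous_Rabs.
    apply continuous_ln. generalize (Rabs_pos z); unfold plus; simpl; lra.
Qed.

Section S1.
Variables (eps : R) (rho : R -> R).
Hypothesis heps : 0 < eps.
Hypothesis hcont : forall r, 0 <= r ->
     filterlim rho (within (fun t => 0 <= t) (locally r)) (locally (rho r)).

Lemma fe_int a b : ex_RInt (fe eps rho) a b.
Proof. apply (@ex_RInt_continuous R_CompleteNormedModule). intros; apply fe_cont; auto. Qed.

Lemma Fe_der s : is_derive (Fe eps rho) s (fe eps rho s).
Proof.
  apply is_derive_RInt with (a := 0).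
  - apply filter_forall. intros b. apply RInt_correct, fe_int.
  - apply fe_cont; auto.
Qed.

Lemma Fe_cont s : continuous (Fe eps rho) s.
Proof. apply (@ex_derive_continuous R_AbsRing R_NormedModule). exists (fe eps rho s). apply Fe_der. Qed.

Lemma Fe_int a b : ex_RInt (Fe eps rho) a b.
Proof. apply (@ex_RInt_continuous R_CompleteNormedModule). intros; apply Fe_cont. Qed.

Lemma ge_der t : is_derive (ge eps rho) t (Fe eps rho t).
Proof.
  apply is_derive_RInt with (a := 0).
  - apply filter_forall. intros b. apply RInt_correct, Fe_int.
  - apply Fe_cont.
Qed.

Lemma Fe_odd s : Fe eps rho (- s) = - Fe eps rho s.
Proof.
  unfold Fe.
  generalize (RInt_comp_lin (fe eps rho) (-1) 0 0 s).
  replace (-1 * 0 + 0) with 0 by ring. replace (-1 * s + 0) with (-s) by ring.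
  intros H. rewrite <- H by apply fe_int.
  rewrite <- (RInt_opp (fe eps rho)) by apply fe_int.
  apply RInt_ext. intros x _. unfold fe.
  replace (-1 * x + 0) with (- x) by ring. rewrite Rabs_Ropp.
  unfold scal; simpl; unfold mult, opp; simpl. ring.
Qed.

Lemma ge_even t : ge eps rho (- t) = ge eps rho t.
Proof.
  unfold ge.
  generalize (RInt_comp_lin (Fe eps rho) (-1) 0 0 t).
  replace (-1 * 0 + 0) with 0 by ring. replace (-1 * t + 0) with (-t) by ring.
  intros H. rewrite <- H by apply Fe_int.
  apply RInt_ext. intros x _.
  replace (-1 * x + 0) with (- x) by ring. rewrite Fe_odd.
  unfold scal; simpl; unfold mult; simpl. ring.
Qed.

End S1.

Definition phi eps rho u := match Rlt_dec 0 u with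
  | left _ => Fe eps rho (sqrt u) / sqrt u | right _ => fe eps rho 0 end.
Definition psi eps rho u := (fe eps rho (sqrt u) - phi eps rho u) / u.

Lemma is_derive_eq (f : R -> R) x l l' : is_derive f x l -> l = l' -> is_derive f x l'.
Proof. intros H ->; exact H. Qed.

Lemma sq0 x y : x^2 + y^2 <= 0 -> x = 0 /\ y = 0.
Proof. intros H. split; nra. Qed.

Section S2.
Variables (eps : R) (rho : R -> R).
Hypothesis heps : 0 < eps.
Hypothesis hcont : forall r, 0 <= r ->
     filterlim rho (within (fun t => 0 <= t) (locally r)) (locally (rho r)).

Lemma Gfun_eq x y : Gfun eps rho x y = ge eps rho (sqrt (x^2+y^2)).
Proof.
  unfold Gfun, ge. apply RInt_ext. intros s Hs.
  rewrite Rmin_left in Hs by apply sqrt_pos.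
  unfold Fe. apply RInt_ext. intros r Hr.
  rewrite Rmin_left in Hr by lra.
  unfold fe, fr. rewrite Rabs_pos_eq by lra. reflexivity.
Qed.

Lemma Gfun_sym x y : Gfun eps rho x y = Gfun eps rho y x.
Proof. unfold Gfun. replace (x^2+y^2) with (y^2+x^2) by ring. reflexivity. Qed.

Lemma Fe0 : Fe eps rho 0 = 0.
Proof. unfold Fe. rewrite RInt_point. reflexivity. Qed.

Lemma d1G_der x y : is_derive (fun t => ge eps rho (sqrt (t^2+y^2))) x (x * phi eps rho (x^2+y^2)).
Proof.
  destruct (Rlt_dec 0 (x^2+y^2)) as [Hq|Hq].
  - assert (Hp : is_derive (fun t => t^2+y^2) x (2*x)).
    { auto_derive. exact I. ring. }
    generalize (is_derive_comp (ge eps rho) (fun t => sqrt(t^2+y^2)) x _ _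
        (ge_der eps rho heps hcont _) (is_derive_sqrt _ _ _ Hp Hq)).
    intros H. apply (is_derive_eq _ _ _ _ H).
    unfold phi. destruct (Rlt_dec 0 (x^2+y^2)) as [_|C]; [|lra].
    assert (0 < sqrt (x^2+y^2)) by (apply sqrt_lt_R0; lra).
    set (s := sqrt (x^2+y^2)) in *.
    unfold scal; simpl; unfold mult; simpl.
    field. lra.
  - assert (x = 0 /\ y = 0) as [-> ->].
    { apply sq0; lra. }
    apply (is_derive_ext (ge eps rho)).
    + intros t. replace (t^2+0^2) with (Rsqr t) by (unfold Rsqr; ring).
      rewrite sqrt_Rsqr_abs. unfold Rabs. destruct (Rcase_abs t).
      * rewrite ge_even; auto.
      * reflexivity.
    + apply (is_derive_eq _ _ _ _ (ge_der eps rho heps hcont 0)).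
      rewrite Fe0, Rmult_0_l. reflexivity.
Qed.

Lemma d1G x y : d1 (Gfun eps rho) x y = x * phi eps rho (x^2+y^2).
Proof.
  unfold d1. rewrite (Derive_ext _ (fun t => ge eps rho (sqrt (t^2+y^2)))).
  apply is_derive_unique, d1G_der.
  intros; apply Gfun_eq.
Qed.

Lemma d2G x y : d2 (Gfun eps rho) x y = y * phi eps rho (x^2+y^2).
Proof.
  unfold d2. rewrite (Derive_ext _ (fun t => Gfun eps rho t x)).
  fold (d1 (Gfun eps rho) y x). rewrite d1G. replace (y^2+x^2) with (x^2+y^2) by ring. reflexivity.
  intros; apply Gfun_sym.
Qed.

End S2.

Section S3.
Variables (eps : R) (rho : R -> R).
Hypothesis heps : 0 < eps.
Hypothesis hcont : forall r, 0 <= r ->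
     filterlim rho (within (fun t => 0 <= t) (locally r)) (locally (rho r)).

Lemma locally_pos q : 0 < q -> locally q (fun t => 0 < t).
Proof.
  intros Hq. exists (mkposreal q Hq). intros t Ht.
  unfold ball in Ht; simpl in Ht; unfold AbsRing_ball, abs, minus, plus, opp in Ht; simpl in Ht.
  apply Rabs_lt_between in Ht. lra.
Qed.

Lemma phi_pos_eq q : 0 < q -> phi eps rho q = Fe eps rho (sqrt q) / sqrt q.
Proof. intros Hq. unfold phi. destruct (Rlt_dec 0 q); [reflexivity|lra]. Qed.

Lemma phi_der q : 0 < q -> is_derive (phi eps rho) q (psi eps rho q / 2).
Proof.
  intros Hq.
  apply (is_derive_ext_loc (fun u => Fe eps rho (sqrt u) / sqrt u)).
  { generalize (locally_pos q Hq). apply filter_imp. intros t Ht. rewrite phi_pos_eq; auto. }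
  assert (Hs : is_derive sqrt q (1 / (2 * sqrt q))).
  { apply (is_derive_sqrt (fun t => t) q 1). apply (is_derive_id q). exact Hq. }
  assert (Hsp : 0 < sqrt q) by (apply sqrt_lt_R0; lra).
  generalize (is_derive_div _ _ q _ _
    (is_derive_comp (Fe eps rho) sqrt q _ _ (Fe_der eps rho heps hcont _) Hs) Hs).
  intros H. specialize (H ltac:(lra)). apply (is_derive_eq _ _ _ _ H).
  unfold psi. rewrite phi_pos_eq by auto.
  assert (Hqq : q = sqrt q * sqrt q) by (rewrite sqrt_sqrt; lra).
  set (s := sqrt q) in *. unfold scal; simpl; unfold mult; simpl.
  rewrite Hqq. field. lra.
Qed.

Lemma Fe_odd_phi t : t * phi eps rho (t^2+0^2) = Fe eps rho t.
Proof.
  destruct (Req_dec t 0) as [->|Ht].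
  - rewrite Fe0, Rmult_0_l; auto.
  - assert (Hq : 0 < t^2+0^2) by nra.
    rewrite phi_pos_eq by auto.
    replace (t^2+0^2) with (Rsqr t) by (unfold Rsqr; ring).
    rewrite sqrt_Rsqr_abs. unfold Rabs. destruct (Rcase_abs t).
    + rewrite Fe_odd by auto. field. lra.
    + field. auto.
Qed.

Lemma L1 a b : Derive (fun t => t * phi eps rho (t^2+b^2)) a
   = phi eps rho (a^2+b^2) + a^2 * psi eps rho (a^2+b^2).
Proof.
  apply is_derive_unique.
  destruct (Rlt_dec 0 (a^2+b^2)) as [Hq|Hq].
  - assert (Hp : is_derive (fun t => t^2+b^2) a (2*a)).
    { auto_derive. exact I. ring. }
    generalize (is_derive_mult (fun t => t) (fun t => phi eps rho (t^2+b^2)) a _ _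
      (is_derive_id a) (is_derive_comp _ _ a _ _ (phi_der _ Hq) Hp) ltac:(intros; apply Rmult_comm)).
    intros H. apply (is_derive_eq _ _ _ _ H).
    set (u := a^2+b^2) in *. set (ph := phi eps rho u). set (ps := psi eps rho u).
    unfold scal, plus, mult, one; simpl. unfold mult, plus; simpl. field.
  - destruct (sq0 a b ltac:(lra)) as [-> ->].
    apply (is_derive_ext (Fe eps rho)).
    + intros t. rewrite Fe_odd_phi. reflexivity.
    + apply (is_derive_eq _ _ _ _ (Fe_der eps rho heps hcont 0)).
      unfold phi. destruct (Rlt_dec 0 (0^2+0^2)); [lra|]. unfold pow. rewrite !Rmult_0_l, Rplus_0_r. reflexivity.
Qed.

Lemma L2 a b c : (a^2+b^2 <= 0 -> c = 0) ->
  Derive (fun t => c * phi eps rho (t^2+b^2)) a = c * a * psi eps rho (a^2+b^2).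
Proof.
  intros Hc. apply is_derive_unique.
  destruct (Rlt_dec 0 (a^2+b^2)) as [Hq|Hq].
  - assert (Hp : is_derive (fun t => t^2+b^2) a (2*a)).
    { auto_derive. exact I. ring. }
    generalize (is_derive_scal _ a c _ (is_derive_comp _ _ a _ _ (phi_der _ Hq) Hp)).
    intros H. apply (is_derive_eq _ _ _ _ H).
    unfold scal; simpl; unfold mult; simpl. field.
  - rewrite Hc by lra.
    apply (is_derive_ext (fun _ => 0)).
    + intros; simpl; rewrite Rmult_0_l; reflexivity.
    + apply (is_derive_eq _ _ _ _ (is_derive_const (V := R_NormedModule) 0 a)). unfold zero; simpl. rewrite !Rmult_0_l. reflexivity.
Qed.

End S3.

Lemma exp_le x y : x <= y -> exp x <= exp y.
Proof. intros [H|H]. left; apply exp_increasing; auto. subst; lra. Qed.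

Lemma ln_le x y : 0 < x -> x <= y -> ln x <= ln y.
Proof. intros H [H'|H']. left; apply ln_increasing; auto. subst; lra. Qed.

Lemma ln_1p_nonneg r : 0 <= r -> 0 <= ln (1+r).
Proof. intros. rewrite <- ln_1. apply ln_le; lra. Qed.

Definition Dc eps := Rabs (ln (Rmin eps 1)) + Rabs (ln (Rmax eps 1)).
Definition Ac p mu eps := mu * Dc eps + Rabs (p-2) * Rabs (ln eps).
Definition Bc p mu eps := Rabs (p-2) * Dc eps + mu * Rabs (ln eps) + Rabs (p-2).

Section S4.
Variables (p mu eps : R) (rho : R -> R).
Hypothesis hp : 1 < p.
Hypothesis hmu : 1 < mu.
Hypothesis heps : 0 < eps.
Hypothesis hrange : forall r, 0 <= r -> 2 - mu <= rho r <= p.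

Lemma ratio_ln r : 0 <= r -> Rabs (ln (eps+r) - ln (1+r)) <= Dc eps.
Proof.
  intros Hr.
  assert (Hk : 0 < Rmin eps 1) by (apply Rmin_glb_lt; lra).
  assert (HK : 0 < Rmax eps 1) by (generalize (Rmax_r eps 1); lra).
  assert (H1 : Rmin eps 1 * (1+r) <= eps + r).
  { generalize (Rmin_l eps 1) (Rmin_r eps 1); intros; nra. }
  assert (H2 : eps + r <= Rmax eps 1 * (1+r)).
  { generalize (Rmax_l eps 1) (Rmax_r eps 1); intros; nra. }
  generalize (ln_le (Rmin eps 1 * (1+r)) (eps+r) ltac:(apply Rmult_lt_0_compat; lra) H1) (ln_le (eps+r) (Rmax eps 1 * (1+r)) ltac:(lra) H2).
  rewrite !ln_mult by lra. unfold Dc.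
  generalize (ln (Rmin eps 1)) (ln (Rmax eps 1)) (ln (eps+r)) (ln (1+r)).
  intros a b c d Ha Hb. unfold Rabs; repeat destruct Rcase_abs; lra.
Qed.

Lemma E_lower r : 0 <= r ->
  - Ac p mu eps - mu * ln (1+r) <= (rho r - 2) * ln (eps + r).
Proof.
  intros Hr. generalize (ratio_ln r Hr) (hrange r Hr) (ln_1p_nonneg r Hr). intros HD [Hr1 Hr2] Hl1.
  assert (Hle : ln eps <= ln (eps + r)) by (apply ln_le; lra).
  unfold Ac. assert (0 <= Dc eps) by (unfold Dc; generalize (Rabs_pos (ln (Rmin eps 1))) (Rabs_pos (ln (Rmax eps 1))); lra).
  revert HD Hle Hl1. generalize (ln (eps + r)) (ln (1+r)) (ln eps). intros L l1 le HD Hle Hl1.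
  destruct (Rle_lt_dec 0 L) as [HL|HL].
  - assert (HD' : L <= l1 + Dc eps) by (revert HD; unfold Rabs; destruct Rcase_abs; lra).
    assert ((rho r - 2) * L >= - mu * L) by nra.
    assert (0 <= Rabs (p-2) * Rabs le) by (apply Rmult_le_pos; apply Rabs_pos).
    nra.
  - assert ((rho r - 2) * L >= (p - 2) * L) by nra.
    assert (Habs: Rabs L <= Rabs le) by (unfold Rabs; repeat destruct Rcase_abs; lra).
    assert ((p-2) * L >= - (Rabs (p-2) * Rabs L)).
    { rewrite <- Rabs_mult. generalize (Rle_abs (-((p-2)*L))); rewrite Rabs_Ropp; lra. }
    assert (Rabs (p-2) * Rabs L <= Rabs (p-2) * Rabs le) by (apply Rmult_le_compat_l; auto; apply Rabs_pos).
    assert (0 <= mu * Dc eps) by (apply Rmult_le_pos; lra). assert (0 <= mu * l1) by (apply Rmult_le_pos; lra). lra.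
Qed.

Lemma ln_lt_1_of r : 0 <= r -> r < 1 -> ln (1+r) < 1.
Proof.
  intros. apply Rle_lt_trans with (ln 2). apply ln_le; lra.
  rewrite <- (ln_exp 1). apply ln_increasing. lra.
  generalize (exp_ineq1 1 ltac:(lra)). lra.
Qed.

Lemma E_upper r : 0 <= r ->
  (rho r - 2) * ln (eps + r) <= Bc p mu eps + (p-2) * ln (1+r).
Proof.
  intros Hr. generalize (ratio_ln r Hr) (hrange r Hr) (ln_1p_nonneg r Hr). intros HD [Hr1 Hr2] Hl1.
  assert (Hle : ln eps <= ln (eps + r)) by (apply ln_le; lra).
  unfold Bc. assert (0 <= Dc eps) by (unfold Dc; generalize (Rabs_pos (ln (Rmin eps 1))) (Rabs_pos (ln (Rmax eps 1))); lra).
  destruct (Rle_lt_dec 0 (ln (eps + r))) as [HL|HL].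
  - revert HD Hle HL. generalize (ln (eps + r)) (ln (1+r)) (ln eps). intros L l1 le HD Hle HL.
    assert ((rho r - 2) * L <= (p - 2) * L) by nra.
    assert ((p-2) * (L - l1) <= Rabs (p-2) * Dc eps).
    { apply Rle_trans with (Rabs ((p-2)*(L-l1))). apply Rle_abs. rewrite Rabs_mult.
      apply Rmult_le_compat_l; auto. apply Rabs_pos. }
    assert (0 <= mu * Rabs le) by (apply Rmult_le_pos; [lra|apply Rabs_pos]).
    generalize (Rabs_pos (p-2)). nra.
  - assert (Hr1' : r < 1).
    { destruct (Rlt_le_dec r 1) as [h|h]; auto. exfalso.
      generalize (ln_le 1 (eps + r) ltac:(lra) ltac:(lra)). rewrite ln_1. lra. }
    generalize (ln_lt_1_of r Hr Hr1'). intros Hl1'.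
    revert HD Hle HL Hl1 Hl1'. generalize (ln (eps + r)) (ln (1+r)) (ln eps). intros L l1 le HD Hle HL Hl1 Hl1'.
    assert ((rho r - 2) * L <= - mu * L) by nra.
    assert (Habs: - L <= Rabs le) by (unfold Rabs; repeat destruct Rcase_abs; lra).
    assert ((p-2) * l1 >= - Rabs (p-2)).
    { assert (Rabs ((p-2)*l1) <= Rabs (p-2)).
      { rewrite Rabs_mult. rewrite (Rabs_pos_eq l1) by lra. generalize (Rabs_pos (p-2)); nra. }
      generalize (Rle_abs (-((p-2)*l1))). rewrite Rabs_Ropp. lra. }
    assert (0 <= Rabs (p-2) * Dc eps) by (apply Rmult_le_pos; auto; apply Rabs_pos).
    nra.
Qed.

Lemma fr_lower r : 0 <= r -> exp (- Ac p mu eps) * Rpower (1+r) (-mu) <= fr eps rho r.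
Proof.
  intros Hr. unfold fr, Rpower. rewrite <- exp_plus. apply exp_le.
  generalize (E_lower r Hr). lra.
Qed.

Lemma fr_upper r : 0 <= r -> fr eps rho r <= exp (Bc p mu eps) * Rpower (1+r) (p-2).
Proof.
  intros Hr. unfold fr, Rpower. rewrite <- exp_plus. apply exp_le.
  generalize (E_upper r Hr). lra.
Qed.

End S4.

Section S5.
Variables (eps : R) (rho : R -> R).
Hypothesis heps : 0 < eps.
Hypothesis hcont : forall r, 0 <= r ->
     filterlim rho (within (fun t => 0 <= t) (locally r)) (locally (rho r)).

Lemma H11_eq x y : H11 (Gfun eps rho) x y = phi eps rho (x^2+y^2) + x^2 * psi eps rho (x^2+y^2).
Proof.
  unfold H11. unfold d1 at 1.
  rewrite (Derive_ext _ (fun t => t * phi eps rho (t^2+y^2))).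
  apply L1; auto. intros; apply d1G; auto.
Qed.

Lemma H22_eq x y : H22 (Gfun eps rho) x y = phi eps rho (x^2+y^2) + y^2 * psi eps rho (x^2+y^2).
Proof.
  unfold H22. unfold d2 at 1.
  rewrite (Derive_ext _ (fun t => t * phi eps rho (t^2+x^2))).
  rewrite L1 by auto. replace (y^2+x^2) with (x^2+y^2) by ring. reflexivity.
  intros; rewrite d2G by auto. replace (x^2+t^2) with (t^2+x^2) by ring. reflexivity.
Qed.

Lemma H12_eq x y : H12 (Gfun eps rho) x y = x * y * psi eps rho (x^2+y^2).
Proof.
  unfold H12. unfold d2 at 1.
  rewrite (Derive_ext _ (fun t => x * phi eps rho (t^2+x^2))).
  rewrite L2 by (auto; intros h; apply (sq0 y x h)). replace (y^2+x^2) with (x^2+y^2) by ring. ring.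
  intros; rewrite d1G by auto. replace (x^2+t^2) with (t^2+x^2) by ring. reflexivity.
Qed.

Lemma H21_eq x y : H21 (Gfun eps rho) x y = x * y * psi eps rho (x^2+y^2).
Proof.
  unfold H21. unfold d1 at 1.
  rewrite (Derive_ext _ (fun t => y * phi eps rho (t^2+y^2))).
  rewrite L2 by (auto; intros h; apply (sq0 x y h)). ring.
  intros; rewrite d2G by auto. reflexivity.
Qed.

End S5.

Lemma RInt_const_R a b c : RInt (fun _ => c) a b = (b - a) * c.
Proof. rewrite (RInt_const (V := R_CompleteNormedModule)). reflexivity. Qed.

Lemma Rpower_mono_base x y b : 0 < x -> x <= y -> 0 <= b -> Rpower x b <= Rpower y b.
Proof. intros. unfold Rpower. apply exp_le. apply Rmult_le_compat_l; auto. apply ln_le; auto. Qed.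

Lemma Rpower_anti_base x y b : 0 < x -> x <= y -> b <= 0 -> Rpower y b <= Rpower x b.
Proof. intros. unfold Rpower. apply exp_le. assert (ln x <= ln y) by (apply ln_le; auto). nra. Qed.

Lemma Rpower_pos x b : 0 < Rpower x b.
Proof. unfold Rpower; apply exp_pos. Qed.

Lemma is_RInt_pow1p (beta a b : R) : 0 <= a -> a <= b -> beta + 1 <> 0 ->
  is_RInt (fun x => Rpower (1+x) beta) a b
    ((Rpower (1+b) (beta+1) - Rpower (1+a) (beta+1)) / (beta+1)).
Proof.
  intros Ha Hab Hb.
  assert (Hd : forall x, 0 <= x -> is_derive (fun x => / (beta+1) * Rpower (1+x) (beta+1)) x (Rpower (1+x) beta)).
  { intros x Hx. apply (is_derive_eq _ _ (/ (beta+1) * (scal 1 ((beta+1) * Rpower (1+x) (beta+1-1))))).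
    apply is_derive_scal.
    apply (is_derive_comp (fun y => Rpower y (beta+1)) (fun x => 1 + x)).
    apply is_derive_Reals. apply derivable_pt_lim_power. lra.
    auto_derive. exact I. ring.
    unfold scal; simpl; unfold mult; simpl. replace (beta+1-1) with beta by ring. field. auto. }
  generalize (is_RInt_derive (fun x => / (beta+1) * Rpower (1+x) (beta+1)) (fun x => Rpower (1+x) beta) a b).
  intros H. 
  replace ((Rpower (1+b) (beta+1) - Rpower (1+a) (beta+1)) / (beta+1)) with
    (minus (/ (beta+1) * Rpower (1+b) (beta+1)) (/ (beta+1) * Rpower (1+a) (beta+1))).
  apply H.
  - intros x Hx. rewrite Rmin_left in Hx by lra. apply Hd. lra.
  - intros x Hx. rewrite Rmin_left in Hx by lra.
    apply (@ex_derive_continuous R_AbsRing R_NormedModule).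
    exists (scal (1:R) (beta * Rpower (1+x) (beta-1))).
    apply (is_derive_comp (fun y => Rpower y beta) (fun x => 1 + x) x _ 1) .
    apply is_derive_Reals. apply derivable_pt_lim_power. lra.
    auto_derive. exact I. ring.
  - unfold minus, plus, opp; simpl. field. auto.
Qed.

Section S6.
Variables (p mu eps : R) (rho : R -> R).
Hypothesis hp : 1 < p.
Hypothesis hmu : 1 < mu.
Hypothesis heps : 0 < eps.
Hypothesis hcont : forall r, 0 <= r ->
     filterlim rho (within (fun t => 0 <= t) (locally r)) (locally (rho r)).
Hypothesis hrange : forall r, 0 <= r -> 2 - mu <= rho r <= p.

Definition cL := exp (- Ac p mu eps).
Definition cU := exp (Bc p mu eps) * (1 + / (p - 1)).

Lemma fe_pos r : 0 < fe eps rho r.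
Proof. apply fr_pos. Qed.

Lemma Fe_nonneg s : 0 <= s -> 0 <= Fe eps rho s.
Proof.
  intros. apply RInt_ge_0; auto. apply fe_int; auto. intros; left; apply fe_pos.
Qed.

Lemma Fe_mono a b : 0 <= a -> a <= b -> Fe eps rho a <= Fe eps rho b.
Proof.
  intros. unfold Fe. rewrite <- (RInt_Chasles (V := R_CompleteNormedModule) (fe eps rho) 0 a b) by (apply fe_int; auto).
  assert (0 <= RInt (fe eps rho) a b).
  { apply RInt_ge_0; auto. apply fe_int; auto. intros; left; apply fe_pos. }
  unfold plus; simpl. lra.
Qed.

Lemma Fe_lower s : 0 <= s -> s * (cL * Rpower (1+s) (-mu)) <= Fe eps rho s.
Proof.
  intros Hs. unfold Fe. rewrite <- (Rminus_0_r s) at 1. rewrite <- RInt_const_R.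
  apply RInt_le; auto. apply (ex_RInt_const (V := R_NormedModule)). apply fe_int; auto.
  intros x Hx. unfold fe. rewrite Rabs_pos_eq by lra.
  eapply Rle_trans; [|apply (fr_lower p mu eps rho); auto; lra].
  unfold cL. apply Rmult_le_compat_l. left; apply exp_pos.
  apply Rpower_anti_base; lra.
Qed.

Lemma fr_upper' r : 0 <= r -> fr eps rho r <= cU * Rpower (1+r) (p-2).
Proof.
  intros Hr. eapply Rle_trans. apply (fr_upper p mu eps rho); auto.
  unfold cU. rewrite Rmult_assoc. apply Rmult_le_compat_l. left; apply exp_pos.
  assert (0 < / (p-1)) by (apply Rinv_0_lt_compat; lra).
  generalize (Rpower_pos (1+r) (p-2)). nra.
Qed.

Lemma Fe_upper s : 0 <= s -> Fe eps rho s <= cU * (s * Rpower (1+s) (p-2)).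
Proof.
  intros Hs. destruct (Rle_lt_dec 2 p) as [H2|H2].
  - eapply Rle_trans with (s * (exp (Bc p mu eps) * Rpower (1+s) (p-2))).
    + unfold Fe. rewrite <- (Rminus_0_r s) at 2. rewrite <- RInt_const_R.
      apply RInt_le; auto. apply fe_int; auto. apply (ex_RInt_const (V := R_NormedModule)).
      intros x Hx. unfold fe. rewrite Rabs_pos_eq by lra.
      eapply Rle_trans; [apply (fr_upper p mu eps rho); auto; lra|].
      apply Rmult_le_compat_l. left; apply exp_pos.
      apply Rpower_mono_base; lra.
    + unfold cU. assert (0 < / (p-1)) by (apply Rinv_0_lt_compat; lra).
      generalize (Rpower_pos (1+s) (p-2)) (exp_pos (Bc p mu eps)). intros.
      set (w := Rpower (1+s) (p-2)) in *. set (e := exp (Bc p mu eps)) in *.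
      assert (0 <= e * (s*w) * /(p-1)) by (repeat apply Rmult_le_pos; lra).
      replace (e * (1 + /(p-1)) * (s*w)) with (s*(e*w) + e*(s*w)*/(p-1)) by ring. lra.
  - assert (Hint := is_RInt_pow1p (p-2) 0 s ltac:(lra) Hs ltac:(lra)).
    assert (HI : RInt (fun x => exp (Bc p mu eps) * Rpower (1+x) (p-2)) 0 s
       = exp (Bc p mu eps) * ((Rpower (1+s) (p-2+1) - Rpower (1+0) (p-2+1)) / (p-2+1))).
    { apply is_RInt_unique. apply (is_RInt_scal _ _ _ (exp (Bc p mu eps)) _ Hint). }
    eapply Rle_trans with (RInt (fun x => exp (Bc p mu eps) * Rpower (1+x) (p-2)) 0 s).
    + unfold Fe. apply RInt_le; auto. apply fe_int; auto. eexists; apply (is_RInt_scal _ _ _ _ _ Hint).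
      intros x Hx. unfold fe. rewrite Rabs_pos_eq by lra.
      apply (fr_upper p mu eps rho); auto; lra.
    + rewrite HI. replace (p-2+1) with ((p-2)+1) by ring.
      rewrite !Rpower_plus. rewrite (Rpower_1 (1+s)) by lra.
      replace (1 + 0) with 1 by ring.
      assert (E1 : forall z, Rpower 1 z = 1) by (intros; unfold Rpower; rewrite ln_1, Rmult_0_r, exp_0; auto).
      rewrite !E1.
      assert (Hw : Rpower (1+s) (p-2) <= 1).
      { unfold Rpower. apply Rle_trans with (exp 0); [apply exp_le|rewrite exp_0; lra]. generalize (ln_1p_nonneg s Hs). intros; nra. }
      set (w := Rpower (1+s) (p-2)) in *.
      assert (0 < w) by apply Rpower_pos.
      unfold cU. generalize (exp_pos (Bc p mu eps)). set (e := exp (Bc p mu eps)). intros He.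
      assert (0 < / (p-1)) by (apply Rinv_0_lt_compat; lra).
      replace (p - 2 + 1) with (p - 1) by ring.
      assert (Hk : (w * (1+s) - 1) / (p-1) <= s * w / (p-1)).
      { unfold Rdiv. apply Rmult_le_compat_r; lra. }
      assert (e * ((w * (1+s) - 1) / (p-1)) <= e * (s * w / (p-1))) by (apply Rmult_le_compat_l; lra).
      assert (0 <= e * (s * w)) by (apply Rmult_le_pos; [lra|apply Rmult_le_pos; lra]).
      unfold Rdiv in *. nra.
Qed.

End S6.

Lemma cs_ineq x y a b : (x*a+y*b)^2 <= (x^2+y^2)*(a^2+b^2).
Proof. assert (0 <= (x*b - y*a)^2) by apply pow2_ge_0. nra. Qed.

Lemma mix_bound ph f n t L U : 0 <= t <= n -> L <= ph <= U -> L <= f <= U ->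
  L * n <= ph * (n - t) + f * t <= U * n.
Proof. intros. nra. Qed.

Section S7.
Variables (p mu eps : R) (rho : R -> R).
Hypothesis hp : 1 < p.
Hypothesis hmu : 1 < mu.
Hypothesis heps : 0 < eps.
Hypothesis hcont : forall r, 0 <= r ->
     filterlim rho (within (fun t => 0 <= t) (locally r)) (locally (rho r)).
Hypothesis hrange : forall r, 0 <= r -> 2 - mu <= rho r <= p.

Lemma D2form_eq x y a b : D2form (Gfun eps rho) x y a b =
   phi eps rho (x^2+y^2) * (a^2+b^2) + psi eps rho (x^2+y^2) * (x*a+y*b)^2.
Proof.
  unfold D2form. rewrite H11_eq, H12_eq, H21_eq, H22_eq by auto. ring.
Qed.

Lemma part1 : forall x y a b : R,
       cL p mu eps * Rpower (1 + norm2 x y) (- mu) * (norm2 a b) ^ 2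
         <= D2form (Gfun eps rho) x y a b /\
       D2form (Gfun eps rho) x y a b
         <= cU p mu eps * Rpower (1 + norm2 x y) (p - 2) * (norm2 a b) ^ 2.
Proof.
  intros x y a b. rewrite D2form_eq. unfold norm2.
  rewrite pow2_sqrt by nra.
  set (n := a^2+b^2).
  assert (Hn : 0 <= n) by (unfold n; nra).
  destruct (Rlt_dec 0 (x^2+y^2)) as [Hq|Hq].
  - set (q := x^2+y^2) in *. set (r := sqrt q).
    assert (Hr : 0 < r) by (apply sqrt_lt_R0; auto).
    assert (Hrq : r * r = q) by (apply sqrt_sqrt; lra).
    set (Lr := cL p mu eps * Rpower (1+r) (-mu)).
    set (Ur := cU p mu eps * Rpower (1+r) (p-2)).
    assert (Hf : Lr <= fe eps rho r <= Ur).
    { unfold fe. rewrite Rabs_pos_eq by lra. split.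
      apply (fr_lower p mu eps rho); auto; lra.
      apply (fr_upper' p mu eps rho); auto; lra. }
    assert (Hph : Lr <= phi eps rho q <= Ur).
    { rewrite phi_pos_eq by auto. fold r.
      generalize (Fe_lower p mu eps rho hmu heps hcont hrange r ltac:(lra))
                 (Fe_upper p mu eps rho hp hmu heps hcont hrange r ltac:(lra)).
      fold Lr. intros H1 H2. split.
      - apply Rmult_le_reg_r with r; auto. unfold Rdiv. rewrite Rmult_assoc, Rinv_l by (apply Rgt_not_eq; lra). lra.
      - apply Rmult_le_reg_r with r; auto. unfold Rdiv. rewrite Rmult_assoc, Rinv_l by (apply Rgt_not_eq; lra).
        unfold Ur. lra. }
    assert (Hcs : (x*a+y*b)^2 <= q * n) by apply cs_ineq.
    set (t := (x*a+y*b)^2 / q).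
    assert (Ht : 0 <= t <= n).
    { unfold t. split. apply Rmult_le_pos. apply pow2_ge_0. left; apply Rinv_0_lt_compat; lra.
      apply Rmult_le_reg_r with q; auto. unfold Rdiv. rewrite Rmult_assoc, Rinv_l by (apply Rgt_not_eq; lra). lra. }
    assert (E : phi eps rho q * n + psi eps rho q * (x*a+y*b)^2
                = phi eps rho q * (n - t) + fe eps rho r * t).
    { unfold psi, t. fold r. field. lra. }
    rewrite E. apply mix_bound; auto.
  - destruct (sq0 x y ltac:(lra)) as [-> ->].
    replace (0^2+0^2) with 0 by ring. rewrite sqrt_0.
    unfold phi. destruct (Rlt_dec 0 0); [lra|].
    replace (0*a+0*b) with 0 by ring.
    assert (H0f : fe eps rho 0 = fr eps rho 0) by (unfold fe; rewrite Rabs_R0; auto).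
    rewrite H0f.
    generalize (fr_lower p mu eps rho hmu heps hrange 0 ltac:(lra))
               (fr_upper' p mu eps rho hp hmu heps hrange 0 ltac:(lra)). intros.
    change (exp (- Ac p mu eps)) with (cL p mu eps) in *. replace (psi eps rho 0 * 0 ^ 2) with 0 by ring. rewrite (Rplus_0_r (fr eps rho 0 * n)). split; apply Rmult_le_compat_r; auto.
Qed.

End S7.

Lemma tail_R0 (mu : R) (rho : R -> R) (hmu : 1 < mu) (hlim : is_lim rho p_infty (2 - mu)) :
  exists R1, 1 <= R1 /\ forall x, R1 <= x -> rho x - 2 <= - ((mu+1)/2).
Proof.
  apply is_lim_spec in hlim. simpl in hlim.
  assert (Hd : 0 < (mu - 1)/2) by lra.
  destruct (hlim (mkposreal _ Hd)) as [M HM]. simpl in HM.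
  exists (Rmax 1 (M+1)). split. apply Rmax_l.
  intros x Hx. generalize (Rmax_r 1 (M+1)); intros.
  specialize (HM x ltac:(lra)). apply Rabs_lt_between in HM. lra.
Qed.

Section S8.
Variables (p mu eps : R) (rho : R -> R).
Hypothesis hp : 1 < p.
Hypothesis hmu : 1 < mu.
Hypothesis heps : 0 < eps.
Hypothesis hcont : forall r, 0 <= r ->
     filterlim rho (within (fun t => 0 <= t) (locally r)) (locally (rho r)).
Hypothesis hrange : forall r, 0 <= r -> 2 - mu <= rho r <= p.
Variable R1 : R.
Hypothesis hR1 : 1 <= R1.
Hypothesis htail : forall x, R1 <= x -> rho x - 2 <= - ((mu+1)/2).

Let al := (mu+1)/2.
Let K2 := exp (al * ln 2).

Lemma fr_tail x : R1 <= x -> fr eps rho x <= K2 * Rpower (1+x) (- al).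
Proof.
  intros Hx. unfold fr, K2, Rpower. rewrite <- exp_plus. apply exp_le.
  assert (H1 : 0 <= ln (eps + x)) by (rewrite <- ln_1; apply ln_le; lra).
  assert (H2 : ln (1 + x) <= ln 2 + ln (eps + x)).
  { rewrite <- ln_mult by lra. apply ln_le; lra. }
  specialize (htail x Hx). fold al in htail.
  assert (0 < al) by (unfold al; lra).
  nra.
Qed.

Lemma K2_pos : 0 < K2.
Proof. apply exp_pos. Qed.

Definition Mb := Fe eps rho R1 + K2 / (al - 1).

Lemma Fe_bound r : 0 <= r -> Fe eps rho r <= Mb.
Proof.
  intros Hr. assert (Hal : 1 < al) by (unfold al; lra).
  assert (0 < K2 / (al - 1)) by (apply Rdiv_lt_0_compat; [apply K2_pos|lra]).
  unfold Mb. destruct (Rle_lt_dec r R1) as [Hle|Hlt].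
  - generalize (Fe_mono eps rho heps hcont r R1 Hr Hle). lra.
  - unfold Fe at 1. rewrite <- (RInt_Chasles (V := R_CompleteNormedModule) (fe eps rho) 0 R1 r) by (apply fe_int; auto).
    fold (Fe eps rho R1). unfold plus; simpl.
    assert (Hint := is_RInt_pow1p (- al) R1 r ltac:(lra) ltac:(lra) ltac:(lra)).
    assert (HI : RInt (fun x => K2 * Rpower (1+x) (- al)) R1 r
       = K2 * ((Rpower (1+r) (- al + 1) - Rpower (1+R1) (- al + 1)) / (- al + 1))).
    { apply is_RInt_unique. apply (is_RInt_scal _ _ _ K2 _ Hint). }
    assert (RInt (fe eps rho) R1 r <= RInt (fun x => K2 * Rpower (1+x) (- al)) R1 r).
    { apply RInt_le; auto. lra. apply fe_int; auto. eexists; apply (is_RInt_scal _ _ _ _ _ Hint).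
      intros x Hx. unfold fe. rewrite Rabs_pos_eq by lra. apply fr_tail. lra. }
    rewrite HI in H0.
    assert (Hb : Rpower (1+R1) (-al+1) <= 1).
    { unfold Rpower. apply Rle_trans with (exp 0); [apply exp_le|rewrite exp_0; lra].
      generalize (ln_1p_nonneg R1 ltac:(lra)). intros; nra. }
    generalize (Rpower_pos (1+r) (-al+1)) K2_pos. intros.
    assert (K2 * ((Rpower (1+r) (- al + 1) - Rpower (1+R1) (- al + 1)) / (- al + 1)) <= K2 / (al - 1)).
    { replace (K2 * ((Rpower (1+r) (- al + 1) - Rpower (1+R1) (- al + 1)) / (- al + 1)))
        with (K2 * ((Rpower (1+R1) (- al + 1) - Rpower (1+r) (- al + 1)) / (al - 1))) by (field; lra).
      unfold Rdiv. apply Rmult_le_compat_l. lra. rewrite <- (Rmult_1_l (/ (al-1))) at 2. apply Rmult_le_compat_r.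
      left; apply Rinv_0_lt_compat; lra. lra. }
    lra.
Qed.

Definition K3 := R1 * R1 * (cU p mu eps * Rpower (1+R1) (Rabs (p-2))).

Lemma r2f_bound r : 0 <= r -> r * r * fr eps rho r <= K2 * (1 + r) + K3.
Proof.
  intros Hr. assert (Hal : 1 < al) by (unfold al; lra).
  assert (HK3 : 0 <= K3).
  { unfold K3. apply Rmult_le_pos. nra. apply Rmult_le_pos.
    unfold cU. apply Rmult_le_pos. left; apply exp_pos.
    assert (0 < / (p-1)) by (apply Rinv_0_lt_compat; lra). lra.
    left; apply Rpower_pos. }
  generalize K2_pos; intros HK2.
  destruct (Rle_lt_dec R1 r) as [H|H].
  - assert (Hf := fr_tail r H).
    assert (Hp1 : (1+r) * Rpower (1+r) (-al) = Rpower (1+r) (-al+1)).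
    { rewrite Rpower_plus, Rpower_1 by lra. ring. }
    assert (Hb : Rpower (1+r) (-al+1) <= 1).
    { unfold Rpower. apply Rle_trans with (exp 0); [apply exp_le|rewrite exp_0; lra].
      generalize (ln_1p_nonneg r ltac:(lra)). intros; nra. }
    assert (r * r * fr eps rho r <= (1+r) * (1+r) * (K2 * Rpower (1 + r) (- al))).
    { apply Rmult_le_compat; try nra. left; apply fr_pos. }
    assert ((1+r) * (1+r) * (K2 * Rpower (1 + r) (- al)) = K2 * (1+r) * Rpower (1+r) (-al+1)).
    { rewrite <- Hp1. ring. }
    assert (K2 * (1+r) * Rpower (1+r) (-al+1) <= K2 * (1+r)).
    { rewrite <- (Rmult_1_r (K2 * (1+r))) at 2. apply Rmult_le_compat_l; nra. }
    lra.
  - assert (Hf := fr_upper' p mu eps rho hp hmu heps hrange r Hr).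
    assert (Rpower (1+r) (p-2) <= Rpower (1+R1) (Rabs (p-2))).
    { apply Rle_trans with (Rpower (1+r) (Rabs (p-2))).
      apply Rle_Rpower. lra. apply Rle_abs.
      apply Rpower_mono_base; try lra. apply Rabs_pos. }
    assert (0 < cU p mu eps).
    { unfold cU. apply Rmult_lt_0_compat. apply exp_pos.
      assert (0 < / (p-1)) by (apply Rinv_0_lt_compat; lra). lra. }
    assert (fr eps rho r <= cU p mu eps * Rpower (1+R1) (Rabs (p-2))).
    { eapply Rle_trans. apply Hf. apply Rmult_le_compat_l; lra. }
    assert (r * r * fr eps rho r <= K3).
    { unfold K3. apply Rmult_le_compat; try nra. left; apply fr_pos. }
    nra.
Qed.

Lemma ge_nonneg r : 0 <= r -> 0 <= ge eps rho r.
Proof.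
  intros. apply RInt_ge_0; auto. apply Fe_int; auto. intros; apply Fe_nonneg; auto; lra.
Qed.

Lemma ge_lower r : 1 <= r -> (r - 1) * Fe eps rho 1 <= ge eps rho r.
Proof.
  intros Hr. unfold ge.
  rewrite <- (RInt_Chasles (V := R_CompleteNormedModule) (Fe eps rho) 0 1 r) by (apply Fe_int; auto).
  unfold plus; simpl.
  assert (0 <= RInt (Fe eps rho) 0 1).
  { apply RInt_ge_0. lra. apply Fe_int; auto. intros; apply Fe_nonneg; auto; lra. }
  assert ((r - 1) * Fe eps rho 1 <= RInt (Fe eps rho) 1 r).
  { rewrite <- RInt_const_R. apply RInt_le; auto. apply (ex_RInt_const (V := R_NormedModule)).
    apply Fe_int; auto. intros; apply Fe_mono; auto; lra. }
  lra.
Qed.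

Lemma D2norm_eq x y : 0 < x^2+y^2 ->
  D2norm (Gfun eps rho) x y = sqrt (phi eps rho (x^2+y^2) ^ 2 + fe eps rho (sqrt (x^2+y^2)) ^ 2).
Proof.
  intros Hq. unfold D2norm. rewrite H11_eq, H12_eq, H21_eq, H22_eq by auto.
  f_equal. unfold psi. generalize (phi eps rho (x^2+y^2)) (fe eps rho (sqrt (x^2+y^2))). intros u v. field. lra.
Qed.

Lemma part2 : exists c49 : R, forall x y : R,
     D2norm (Gfun eps rho) x y * (norm2 x y) ^ 2 <= c49 * (Gfun eps rho x y + 1).
Proof.
  assert (Hm1 : 0 < Fe eps rho 1).
  { generalize (Fe_lower p mu eps rho hmu heps hcont hrange 1 ltac:(lra)).
    assert (0 < cL p mu eps) by apply exp_pos. generalize (Rpower_pos (1+1) (-mu)). intros. nra. }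
  assert (HMb : 0 <= Mb).
  { unfold Mb. generalize (Fe_nonneg eps rho heps hcont R1 ltac:(lra)).
    assert (0 < K2 / (al - 1)) by (apply Rdiv_lt_0_compat; [apply K2_pos|unfold al; lra]). lra. }
  assert (HK3 : 0 <= K3).
  { unfold K3. apply Rmult_le_pos. nra. apply Rmult_le_pos.
    unfold cU. apply Rmult_le_pos. left; apply exp_pos.
    assert (0 < / (p-1)) by (apply Rinv_0_lt_compat; lra). lra.
    left; apply Rpower_pos. }
  generalize K2_pos; intros HK2.
  set (m1 := Fe eps rho 1) in *.
  set (A := Mb + K2). set (B := K2 + K3).
  assert (HA : 0 <= A) by (unfold A; lra). assert (HB : 0 <= B) by (unfold B; lra).
  assert (Hc2 : 0 <= 2 * A / m1) by (apply Rmult_le_pos; [lra|left; apply Rinv_0_lt_compat; lra]).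
  exists (2*A + B + 2*A/m1).
  assert (Hfin : forall r, 0 <= r -> A * r + B <= (2*A + B + 2*A/m1) * (ge eps rho r + 1)).
  { intros r Hr. generalize (ge_nonneg r Hr). intros Hg.
    destruct (Rle_lt_dec r 2) as [H2|H2].
    - assert (A * r <= 2 * A) by nra.
      assert (0 <= (2*A + B + 2*A/m1) * ge eps rho r) by (apply Rmult_le_pos; lra).
      nra.
    - generalize (ge_lower r ltac:(lra)). fold m1. intros Hgl.
      assert (Hk : 2*A/m1 * m1 = 2*A) by (field; lra).
      assert (2*A/m1 * ((r-1) * m1) <= 2*A/m1 * ge eps rho r) by (apply Rmult_le_compat_l; lra).
      assert (0 <= (2*A + B) * ge eps rho r) by (apply Rmult_le_pos; lra).
      assert (2*A/m1 * ((r-1) * m1) = A * r + A * (r - 2)) by (rewrite <- Rmult_assoc, (Rmult_comm _ m1), <- Rmult_assoc, (Rmult_comm m1), Hk; ring).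
      assert (0 <= A * (r - 2)) by (apply Rmult_le_pos; lra).
      nra. }
  intros x y. rewrite Gfun_eq. unfold norm2.
  rewrite pow2_sqrt by nra.
  destruct (Rlt_dec 0 (x^2+y^2)) as [Hq|Hq].
  - rewrite D2norm_eq by auto.
    set (q := x^2+y^2) in *. set (r := sqrt q).
    assert (Hr : 0 < r) by (apply sqrt_lt_R0; auto).
    assert (Hrq : r * r = q) by (apply sqrt_sqrt; lra).
    assert (Hph : phi eps rho q = Fe eps rho r / r) by (apply phi_pos_eq; auto).
    assert (Hfr : fe eps rho r = fr eps rho r) by (unfold fe; rewrite Rabs_pos_eq by lra; auto).
    rewrite Hph, Hfr.
    assert (HF0 : 0 <= Fe eps rho r) by (apply Fe_nonneg; auto; lra).
    assert (HFp : 0 <= Fe eps rho r / r) by (apply Rdiv_le_0_compat; lra).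
    generalize (fr_pos eps rho r). intros Hf0.
    assert (Hs : sqrt ((Fe eps rho r / r) ^ 2 + fr eps rho r ^ 2) <= Fe eps rho r / r + fr eps rho r).
    { rewrite <- (sqrt_pow2 (Fe eps rho r / r + fr eps rho r)) by lra.
      apply sqrt_le_1_alt. nra. }
    assert (Hlhs : (Fe eps rho r / r + fr eps rho r) * q = r * Fe eps rho r + r * r * fr eps rho r).
    { rewrite <- Hrq. field. lra. }
    assert (HFb : Fe eps rho r <= Mb) by (apply Fe_bound; lra).
    assert (Hr2 := r2f_bound r ltac:(lra)).
    assert (r * Fe eps rho r <= Mb * r) by nra.
    assert (sqrt ((Fe eps rho r / r) ^ 2 + fr eps rho r ^ 2) * q <= (Fe eps rho r / r + fr eps rho r) * q)
      by (apply Rmult_le_compat_r; lra).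
    generalize (Hfin r ltac:(lra)). unfold A, B. nra.
  - destruct (sq0 x y ltac:(lra)) as [-> ->].
    replace (0^2+0^2) with 0 by ring. rewrite sqrt_0, Rmult_0_r.
    unfold ge. rewrite RInt_point. simpl.
    generalize (Hfin 0 ltac:(lra)). unfold ge. rewrite RInt_point. simpl. intros.
    assert (0 <= 2 * A + B + 2 * A / m1) by lra. unfold zero; simpl. lra.
Qed.

End S8.

Theorem proposition5p5 (p mu eps : R) (rho : R -> R)
  (hp : 1 < p) (hmu : 1 < mu) (heps : 0 < eps)
  (hcont : forall r, 0 <= r ->
     filterlim rho (within (fun t => 0 <= t) (locally r)) (locally (rho r)))
  (hdec : forall r s, 0 <= r -> r <= s -> rho s <= rho r)
  (hrange : forall r, 0 <= r -> 2 - mu <= rho r <= p)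
  (h0 : rho 0 = p)
  (hlim : is_lim rho p_infty (2 - mu)) :
  (exists c5 c6 : R, 0 < c5 /\ 0 < c6 /\
     forall x y a b : R,
       c5 * Rpower (1 + norm2 x y) (- mu) * (norm2 a b) ^ 2
         <= D2form (Gfun eps rho) x y a b /\
       D2form (Gfun eps rho) x y a b
         <= c6 * Rpower (1 + norm2 x y) (p - 2) * (norm2 a b) ^ 2) /\
  (exists c49 : R, forall x y : R,
     D2norm (Gfun eps rho) x y * (norm2 x y) ^ 2 <= c49 * (Gfun eps rho x y + 1)).
Proof.
  split.
  - exists (cL p mu eps), (cU p mu eps). split. apply exp_pos. split.
    { unfold cU. apply Rmult_lt_0_compat. apply exp_pos.
      assert (0 < / (p-1)) by (apply Rinv_0_lt_compat; lra). lra. }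
    apply (part1 p mu eps rho); auto.
  - destruct (tail_R0 mu rho hmu hlim) as [R1 [hR1 htail]].
    apply (part2 p mu eps rho) with (R1 := R1); auto.
Qed.
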